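(* Assume $\mathcal I$ is $\tau$-standard. Then: (a) for every $\underline d\in\mathbb N_0^m$ there is exactly one weakly decreasing sequence $I_1\supseteq\dots\supseteq I_s$ in $\mathcal I$ (with $s\ge0$) such that $\sum_{k=1}^se_{I_k}=\underline d$; (b) for every $I\in\mathcal I$ and $d\in\mathbb N_0$, $\mathrm{LS}^+_{\lambda_I}(d)=\mathrm{LS}^+_{\underline\lambda}(d\,e_I)$, where $\mathrm{LS}^+_{\lambda_I}(d)$ denotes the set of elements of $\mathrm{LS}^+_{\underline\lambda}$ of degree $d e_I$ whose support lies in $\{(\theta,J)\in D(\underline\lambda,\tau):J=I\}$.
   Context: Let $G$ be a connected, simply-connected, simple algebraic group over an algebraically closed field of characteristic zero, $T\subseteq B$, $W$ the Weyl group, $W_\nu$ stabilizers; $W/W_{Q'}$ has the Bruhat order, $\pi_{Q_2}$ denotes projections and $\min_{Q_1},\max_{Q_1}$ minimal/maximal preimages, $\min_B(\theta)$ minimal representatives. Standing data: dominant $\lambda_1,\dots,\lambda_m$, $\underline\lambda=(\lambda_1,\dots,\lambda_m)$, $\lambda=\sum\lambda_i$, $Q=BW_\lambda B$, $\tau\in W/W_Q$. $\mathcal I$ is a set of nonempty subsets of $[m]$ ordered by inclusion, graded of length $m-1$, satisfying ( * ): $\underline J\subseteq I\Rightarrow J\subseteq I$ (with $\underline J=J$ if $J$ is minimal in $\mathcal I$, else $\underline J=\bigcup\{J\setminus K:K\in\mathcal I$ covered by $J\}$); $e_I=\sum_{i\in\underline I}e_i\in\mathbb N_0^m$, $\lambda_I=\sum_{i\in\underline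 I}\lambda_i$, $P_I=BW_{\lambda_I}B$. $\underline W(\underline\lambda,\tau)=\bigsqcup_I\{\theta\in W/W_{P_I}:\theta\le\pi_{P_I}(\tau)\}\times\{I\}$, ordered by the transitive closure of $(\theta,I)\ge(\phi,J)$ iff $I\supseteq J$ and $\max_Q(\theta)\ge\min_Q(\phi)$; a chain is $\tau$-standard if it lifts (same index sets) along $(\theta,I)\mapsto(\pi_{P_I}(\theta),I)$ to a chain in $\{\theta\in W/W_Q:\theta\le\tau\}\times\mathcal I$ (product order). $D(\underline\lambda,\tau)$ (order $\succeq$): elements lying in a lift of some maximal $\tau$-standard chain, $x\succeq y$ iff $x\ge y$ and both lie in a common such lift. $\mathcal I$ is $\tau$-standard if the projection $D(\underline\lambda,\tau)\to\underline W(\underline\lambda,\tau)$ is a poset isomorphism. Bond numbers for covering $(\theta,I)\succ(\phi,J)$: $|\langle\phi(\lambda_I),\beta^\vee\rangle|$ if $I=J$ ($\beta$ the positive root with $s_\beta\min_B(\phi)=\min_B(\theta)$), $1$ if $I\neq J$. For a maximal chain $\mathfrak C:p_r\succ\dots\succ p_0$: $\mathrm{LS}_{\mathfrak C}=\{\sum a_ie_{p_i}:b_{p_i,p_{i-1}}(a_i+\dots+a_r)\in\mathbb Z\ \forall i\in[r],\ \sum a_i\in\mathbb Z\}$; $\mathrm{LS}^+_{\underline\lambda}=\bigcup_{\mathfrak C}(\mathrm{LS}_{\mathfrak C}\cap\mathbb Q^{\mathfrak C}_{\ge0})$; $\deg e_{(\theta,I)}=e_I$ (extended linearly), and $\mathrm{LS}^+_{\underline\lambda}(\underline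 d)$ consists of elements of degree $\underline d$. *)

(* Defs.v *)
(* Combinatorial model of the Weyl-group data of a simple,
   simply-connected group, given by its (irreducible, finite type) Cartan matrix. *)
From HB Require Import structures.
From mathcomp Require Import all_boot all_order all_algebra.
From Stdlib Require Import Relation_Operators.
Set Implicit Arguments. Unset Strict Implicit. Unset Printing Implicit Defensive.
Import Order.TTheory GRing.Theory Num.Theory.
Local Open Scope ring_scope.

Section Weyl.
Variable l : nat.
Variable A : 'M[int]_l.

(* Weights of the simply connected group: integer coordinates w.r.t. the
   fundamental weights, i.e. (mu ord0 i) = <mu, alpha_i^vee>. *)
Definition weight := 'rV[int]_l.

(* Convention: <alpha_j, alpha_i^vee> = A i j. *)
Definition alpha (j : 'I_l) : weight := \row_k A k j.

Definition cartan_finite_irred : Prop :=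
  [/\ (0 < l)%N,
      (forall i, A i i = 2) /\
      (forall i j, i != j -> A i j <= 0),
      (forall i j, (A i j == 0) = (A j i == 0)),
      (exists d : 'I_l -> rat,
          [/\ forall i, 0 < d i,
              forall i j, d i * (A i j)%:~R = d j * (A j i)%:~R &
              forall x : 'I_l -> rat, (exists i, x i != 0) ->
                0 < \sum_i \sum_j x i * d i * (A i j)%:~R * x j]) &
      (forall S : {set 'I_l}, S != set0 -> S != setT ->
          exists i j, [/\ i \in S, j \notin S & A i j != 0])].

Definition dominant (mu : weight) := forall i, 0 <= mu ord0 i.

Definition sref (i : 'I_l) (mu : weight) : weight := mu - (mu ord0 i) *: alpha i.

(* Weyl group elements given by words; [:: i1; ..; ik] is s_i1 ... s_ik *)
Definition wact (w : seq 'I_l) (mu : weight) : weight := foldr sref mu w.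
Definition weq (u v : seq 'I_l) := forall mu, wact u mu = wact v mu.
Definition reduced (w : seq 'I_l) := forall v, weq v w -> (size w <= size v)%N.

(* Bruhat order on W (subword property) *)
Definition bruhat (u w : seq 'I_l) :=
  exists w' u', [/\ weq w' w, reduced w', subseq u' w' & weq u' u].

(* W/W_nu is identified with the orbit W.nu (theta <-> theta(nu)).
   u is a (word of) the minimal representative min_B(theta) of theta. *)
Definition isMinRep (nu th : weight) (u : seq 'I_l) :=
  wact u nu = th /\ forall v, wact v nu = th -> (size u <= size v)%N.

(* Bruhat order on W/W_nu via minimal representatives *)
Definition leW (nu th ph : weight) :=
  exists u w, [/\ isMinRep nu th u, isMinRep nu ph w & bruhat u w].

(* projection W/W_nu -> W/W_nu' (when W_nu <= W_nu'):  x |-> th *)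
Definition projR (nu nu' x th : weight) :=
  exists u, wact u nu = x /\ wact u nu' = th.

Definition posRoot (b : weight) :=
  exists c : 'I_l -> nat, b = \sum_j (c j)%:Z *: alpha j.

End Weyl.

Section Stand.
Variable l : nat.
Variable A : 'M[int]_l.
Variable m : nat.
Variable lam : 'I_m -> weight l.
Variable tau : weight l.
Variable Ical : {set {set 'I_m}}.

Definition covb (K J : {set 'I_m}) :=
  [&& K \in Ical, K \proper J &
      [forall L in Ical, ~~ ((K \proper L) && (L \proper J))]].

Definition under (J : {set 'I_m}) : {set 'I_m} :=
  if [exists K in Ical, K \proper J]
  then \bigcup_(K | covb K J) (J :\: K) else J.

Definition eI (I : {set 'I_m}) (i : 'I_m) : nat := (i \in under I).
Definition lamI (I : {set 'I_m}) : weight l := \sum_(i in under I) lam i.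
Definition lamAll : weight l := \sum_i lam i.

Definition IChain (C : {set {set 'I_m}}) :=
  C \subset Ical /\ forall X Y, X \in C -> Y \in C -> X \subset Y \/ Y \subset X.

Definition Ical_ok :=
  [/\ (forall I, I \in Ical -> I != set0),
      (* graded of length m-1: all maximal chains have m elements *)
      (forall C, IChain C -> (forall C', IChain C' -> C \subset C' -> C' = C) ->
         #|C| = m) &
      (forall I J, I \in Ical -> J \in Ical -> under J \subset I -> J \subset I)].

Definition elt := (weight l * {set 'I_m})%type.
Definition x0 : elt := (0, set0).

Definition inWu (p : elt) :=
  [/\ p.2 \in Ical, exists u, wact A u (lamI p.2) = p.1 &
      exists t, projR A lamAll (lamI p.2) tau t /\ leW A (lamI p.2) p.1 t].

Definition isPre (p : elt) (x : weight l) := projR A lamAll (lamI p.2) x p.1.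
Definition isMaxPre p x := isPre p x /\ forall y, isPre p y -> leW A lamAll y x.
Definition isMinPre p x := isPre p x /\ forall y, isPre p y -> leW A lamAll x y.

Definition Rrel (p q : elt) :=
  [/\ inWu p, inWu q, q.2 \subset p.2 &
      exists x y, [/\ isMaxPre p x, isMinPre q y & leW A lamAll y x]].

Definition geW : elt -> elt -> Prop := clos_trans elt Rrel.
Definition gtW p q := geW p q /\ p <> q.

Definition chainW (c : seq elt) :=
  [/\ uniq c, forall p, p \in c -> inWu p &
      forall p q, p \in c -> q \in c -> geW p q \/ geW q p].

(* the lift poset {x in W/W_Q : x <= tau} x Ical, product order *)
Definition inLiftSet (a : elt) :=
  [/\ a.2 \in Ical, exists u, wact A u lamAll = a.1 & leW A lamAll a.1 tau].
Definition geP (a b : elt) := leW A lamAll b.1 a.1 /\ b.2 \subset a.2.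
Definition chainP (c : seq elt) :=
  [/\ uniq c, forall a, a \in c -> inLiftSet a &
      forall a b, a \in c -> b \in c -> geP a b \/ geP b a].

Definition isProj (a p : elt) := a.2 = p.2 /\ projR A lamAll (lamI a.2) a.1 p.1.

Definition liftOf (c' c : seq elt) :=
  [/\ chainP c', size c' = size c &
      forall k, (k < size c)%N -> isProj (nth x0 c' k) (nth x0 c k)].

Definition stdChain c := chainW c /\ exists c', liftOf c' c.
Definition maxStd c :=
  stdChain c /\ forall c', stdChain c' -> {subset c <= c'} -> {subset c' <= c}.

Definition inD (a : elt) := exists c c', [/\ maxStd c, liftOf c' c & a \in c'].
Definition succD (a b : elt) :=
  geP a b /\ exists c c', [/\ maxStd c, liftOf c' c, a \in c' & b \in c'].

(* Ical is tau-standard: projection D -> underline-W is a poset isomorphism *)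
Definition tauStandard :=
  [/\ (forall a, inD a -> exists p, isProj a p /\ inWu p),
      (forall p, inWu p -> exists a, inD a /\ isProj a p),
      (forall a b p, inD a -> inD b -> isProj a p -> isProj b p -> a = b) &
      (forall a b p q, inD a -> inD b -> isProj a p -> isProj b q ->
          (succD a b <-> geW p q))].

Definition bondR (p q : elt) (b : int) :=
  if p.2 == q.2 then
    exists w i u v,
      [/\ isMinRep A (lamI p.2) p.1 u, isMinRep A (lamI q.2) q.1 v,
          posRoot A (wact A w (alpha A i)),
          weq A (w ++ i :: rev w ++ v) u &
          b = `|(wact A (rev w) q.1) ord0 i| ]
  else b = 1.

(* maximal chains of underline-W, listed decreasingly p_r > ... > p_0 *)
Definition maxChainW (c : seq elt) :=
  [/\ chainW c,
      (forall j k, (j < k < size c)%N -> gtW (nth x0 c j) (nth x0 c k)) &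
      forall c', chainW c' -> {subset c <= c'} -> {subset c' <= c}].

Definition isInt (x : rat) := x \is a Num.int.

(* f : formal Q-linear combination sum_p f(p) e_p, lying in LS_c cap Q^c_{>=0} *)
Definition LSchain (c : seq elt) (f : elt -> rat) :=
  [/\ maxChainW c,
      (forall p, p \notin c -> f p = 0),
      (forall p, p \in c -> 0 <= f p),
      (forall k, (k.+1 < size c)%N -> exists b, bondR (nth x0 c k) (nth x0 c k.+1) b /\
          isInt (b%:~R * \sum_(j < k.+1) f (nth x0 c j))) &
      isInt (\sum_(p <- c) f p)].

Definition degree (c : seq elt) (f : elt -> rat) (i : 'I_m) : rat :=
  \sum_(p <- c) f p * (eI p.2 i)%:R.

Definition LSdeg (d : 'I_m -> nat) (f : elt -> rat) :=
  exists c, LSchain c f /\ forall i, degree c f i = (d i)%:R.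

End Stand.

(* Main.v *)
Require Import Defs.
From HB Require Import structures.
From mathcomp Require Import all_boot all_order all_algebra.
From mathcomp Require Import zify.
From Stdlib Require Import Relation_Operators.
Import Order.TTheory GRing.Theory Num.Theory.

Module Helpers.
Set Implicit Arguments. Unset Strict Implicit. Unset Printing Implicit Defensive.

Definition chainb m (Ical : {set {set 'I_m}}) (C : {set {set 'I_m}}) :=
  (C \subset Ical) && [forall X in C, forall Y in C, (X \subset Y) || (Y \subset X)].

Lemma chainbP m (Ical : {set {set 'I_m}}) C : reflect (IChain Ical C) (chainb Ical C).
Proof.
apply: (iffP andP) => [[h1 /forallP h2]|[h1 h2]]; split => //.
- move=> X Y hX hY; move: (h2 X); rewrite hX /= => /forallP/(_ Y); rewrite hY /=.
  by case/orP; [left|right].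
- apply/forallP => X; apply/implyP => hX; apply/forallP => Y; apply/implyP => hY.
  by case: (h2 X Y hX hY) => ->; rewrite ?orbT.
Qed.

Lemma ext_chain m (Ical : {set {set 'I_m}}) (Hok : Ical_ok Ical) C :
  chainb Ical C -> exists C', [/\ chainb Ical C', C \subset C' & #|C'| = m].
Proof.
move=> hC.
case: (@arg_maxnP _ C (fun D => chainb Ical D && (C \subset D)) (fun D => #|D|)).
  by rewrite hC subxx.
move=> D /andP[hD sCD] hmax; exists D; split => //.
case: Hok => _ Hg _; apply: Hg; first exact/chainbP.
move=> C'' /chainbP hC'' sDC; apply/eqP; rewrite eq_sym eqEcard sDC /=.
by apply: hmax; rewrite hC'' (subset_trans sCD sDC).
Qed.

Lemma card_le_m m (X : {set 'I_m}) : (#|X| <= m)%N.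
Proof. by rewrite -[X in (_ <= X)%N]card_ord max_card. Qed.

Lemma chain_card_lt m (Ical : {set {set 'I_m}}) C v : chainb Ical C ->
  (forall X, X \in C -> X != set0) -> (0 < v <= m)%N ->
  (forall X, X \in C -> #|X| != v) -> (#|C| < m)%N.
Proof.
move=> /andP[_ /forallP hc] hne /andP[v0 vm] hv.
pose f := fun X : {set 'I_m} => (inord #|X| : 'I_m.+1).
have injf : {in C &, injective f}.
  move=> X Y hX hY /(congr1 val); rewrite /f /= !inordK ?ltnS ?card_le_m // => hXY.
  move: (hc X); rewrite hX /= => /forallP/(_ Y); rewrite hY /=.
  case/orP => h; apply/eqP.
    by rewrite eqEcard h hXY /=.
  by rewrite eq_sym eqEcard h hXY /=.
rewrite -(card_in_imset injf).
apply: (@leq_ltn_trans #|~: [set (ord0 : 'I_m.+1); inord v]|).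
  apply: subset_leq_card; apply/subsetP => k /imsetP[X hX ->].
  rewrite !inE negb_or; apply/andP; split; apply/eqP => /(congr1 val).
    rewrite /f /= inordK ?ltnS ?card_le_m //; apply/eqP; rewrite cards_eq0; exact: hne.
  rewrite /f /= !inordK ?ltnS ?card_le_m //; apply/eqP; exact: hv.
have := cardsC [set (ord0 : 'I_m.+1); inord v]; rewrite card_ord cards2.
have -> : (ord0 : 'I_m.+1) != inord v.
  by apply/eqP => /(congr1 val); rewrite /= inordK ?ltnS //; move=> h; rewrite -h in v0.
lia.
Qed.

Lemma setT_in m (Ical : {set {set 'I_m}}) (Hok : Ical_ok Ical) : (0 < m)%N -> setT \in Ical.
Proof.
move=> m0.
have [C [hC _ hcard]] : exists C', [/\ chainb Ical C', set0 \subset C' & #|C'| = m].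
  apply: ext_chain => //; rewrite /chainb sub0set /=; apply/forallP => X; by rewrite inE.
case: (boolP [exists X in C, #|X| == m]) => [/existsP[X /andP[hX /eqP hXm]] | hno].
  have -> : (setT : {set 'I_m}) = X.
    by apply/eqP; rewrite eq_sym eqEcard subsetT cardsT card_ord hXm /=.
  by case/andP: hC => /subsetP h _; apply: h.
have H := @chain_card_lt m Ical C m hC.
rewrite hcard ltnn m0 leqnn in H; suff: false by []; apply: H => //.
  by move=> X hX; case: Hok => H1 _ _; apply: H1; case/andP: hC => /subsetP h _; apply: h.
move=> X hX; apply/negP => hXm; move/negP: hno; apply; apply/existsP; exists X; by rewrite hX.
Qed.

Lemma min_card1 m (Ical : {set {set 'I_m}}) (Hok : Ical_ok Ical) J : J \in Ical ->
  ~~ [exists K in Ical, K \proper J] -> (#|J| <= 1)%N.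
Proof.
move=> hJ hno; rewrite leqNgt; apply/negP => hJ2.
have [C [hC sJC hcard]] : exists C', [/\ chainb Ical C', [set J] \subset C' & #|C'| = m].
  apply: ext_chain => //; rewrite /chainb sub1set hJ /=.
  apply/forallP => X; apply/implyP; rewrite inE => /eqP ->.
  apply/forallP => Y; apply/implyP; rewrite inE => /eqP ->; by rewrite subxx.
have JC : J \in C by rewrite -sub1set.
have hCI := hC; case/andP: hCI => /subsetP hCI /forallP hc.
have H := @chain_card_lt m Ical C 1 hC.
rewrite hcard ltnn /= in H; suff: false by []; apply: H.
- by move=> X hX; case: Hok => H1 _ _; apply: H1; apply: hCI.
- by have := card_le_m J; lia.
- move=> X hX; move: (hc X); rewrite hX /= => /forallP/(_ J); rewrite JC /=.
  case/orP => h.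
  + case: (boolP (X \proper J)) => hp.
      by exfalso; move/negP: hno; apply; apply/existsP; exists X; rewrite hp hCI.
    have -> : X = J by apply/eqP; rewrite eqEproper h hp.
    by rewrite neq_ltn hJ2 orbT.
  + by rewrite neq_ltn (leq_trans hJ2 (subset_leq_card h)) orbT.
Qed.

Lemma cov_card m (Ical : {set {set 'I_m}}) (Hok : Ical_ok Ical) K J : J \in Ical ->
  covb Ical K J -> (#|J :\: K| <= 1)%N.
Proof.
move=> hJ /and3P[hK hKJ /forallP hnone].
have sKJ : K \subset J by apply: proper_sub.
rewrite cardsD (setIidPr sKJ) leqNgt; apply/negP => h2.
have hlt : (#|K| + 2 <= #|J|)%N by lia.
have [C [hC sC hcard]] : exists C', [/\ chainb Ical C', [set K; J] \subset C' & #|C'| = m].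
  apply: ext_chain => //; rewrite /chainb; apply/andP; split.
    by apply/subsetP => X; rewrite !inE => /orP[] /eqP ->.
  apply/forallP => X; apply/implyP; rewrite !inE => hX.
  apply/forallP => Y; apply/implyP; rewrite !inE => hY.
  by case/orP: hX => /eqP ->; case/orP: hY => /eqP ->; rewrite ?subxx ?sKJ ?orbT.
have KC : K \in C by apply: (subsetP sC); rewrite !inE eqxx.
have JC : J \in C by apply: (subsetP sC); rewrite !inE eqxx orbT.
have hCI := hC; case/andP: hCI => /subsetP hCI /forallP hc.
have H := @chain_card_lt m Ical C #|K|.+1 hC.
rewrite hcard ltnn /= in H; suff: false by []; apply: H.
- by move=> X hX; case: Hok => H1 _ _; apply: H1; apply: hCI.
- apply: leq_trans (card_le_m J); apply: leq_trans hlt; by rewrite addn2.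
- move=> X hX; apply/eqP => hXv.
  move: (hc X); rewrite hX /= => /forallP hcX.
  move: (hcX K); rewrite KC /= => /orP[] h1.
    by move: (subset_leq_card h1); rewrite hXv ltnn.
  move: (hcX J); rewrite JC /= => /orP[] h3.
    have := hnone X; rewrite hCI //= => /negP; apply.
    rewrite !properEcard h1 h3 hXv /= ltnSn /=; apply: leq_trans hlt; by rewrite addn2.
  move: (subset_leq_card h3); rewrite hXv => h4.
  by move: (leq_trans hlt h4); rewrite addn2 ltnn.
Qed.

Lemma under_sub m (Ical : {set {set 'I_m}}) J : under Ical J \subset J.
Proof. rewrite /under; case: ifP => _ //; apply/bigcupsP => K _; exact: subsetDl. Qed.

Lemma under_nonempty m (Ical : {set {set 'I_m}}) (Hok : Ical_ok Ical) J :
  J \in Ical -> under Ical J != set0.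
Proof.
move=> hJ; rewrite /under; case: ifP => [/existsP[K /andP[hK hKJ]] | _]; last first.
  by case: Hok => H1 _ _; apply: H1.
case: (@arg_maxnP _ K (fun K => (K \in Ical) && (K \proper J)) (fun D => #|D|)).
  by rewrite hK hKJ.
move=> K' /andP[hK' hK'J] hmax.
have hcov : covb Ical K' J.
  rewrite /covb hK' hK'J /=; apply/forallP => L; apply/implyP => hL.
  apply/negP => /andP[h1 h2]; have := hmax L; rewrite hL h2 => /(_ isT).
  by rewrite /= leqNgt proper_card.
have : J :\: K' != set0.
  by apply/negP; rewrite setD_eq0 => h; move: hK'J; rewrite properE h andbF.
case/set0Pn => x hx; apply/set0Pn; exists x.
by apply: (subsetP (bigcup_sup K' hcov)).
Qed.

Lemma exist_first m (Ical : {set {set 'I_m}}) (Hok : Ical_ok Ical) (S : {set 'I_m}) :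
  S != set0 -> exists I, [/\ I \in Ical, under Ical I \subset S & S \subset I].
Proof.
move=> hS.
have m0 : (0 < m)%N by case/set0Pn: hS => x _; exact: leq_ltn_trans (leq0n x) (ltn_ord x).
case: (@arg_minnP _ setT (fun I => (I \in Ical) && (S \subset I)) (fun D => #|D|)).
  by rewrite setT_in // subsetT.
move=> I /andP[hI hSI] hmin; exists I; split => //.
rewrite /under; case: ifP => [hex|hno]; last first.
  have h1 := min_card1 Hok hI (negbT hno).
  have : S == I by rewrite eqEcard hSI (leq_trans h1) // card_gt0.
  by move/eqP ->.
apply/bigcupsP => K hcov; apply/subsetP => j /setDP[hjI hjK].
apply/negPn/negP => hjS.
have hK : K \in Ical by case/and3P: hcov.
have hKI : K \proper I by case/and3P: hcov.
have sSK : S \subset K.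
  apply/subsetP => x hx; apply/negPn/negP => hxK.
  have := cov_card Hok hI hcov.
  have : [set x; j] \subset I :\: K.
    by apply/subsetP => y; rewrite !inE => /orP[] /eqP ->; rewrite ?hxK ?hjK ?hjI ?(subsetP hSI).
  move/subset_leq_card; rewrite cards2.
  have -> : x != j by apply/eqP => exj; move: hjS; rewrite -exj hx.
  move=> h1 h2; have := leq_trans h1 h2; by [].
have := hmin K; rewrite hK sSK => /(_ isT).
by rewrite leqNgt proper_card.
Qed.

Definition Rsub m := (fun X Y : {set 'I_m} => Y \subset X).

Lemma Rsub_trans m : transitive (@Rsub m).
Proof. by move=> y x z h1 h2; rewrite /Rsub (subset_trans h2 h1). Qed.

Lemma eI_le m (Ical : {set {set 'I_m}}) I (d : 'I_m -> nat) i :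
  under Ical I \subset [set i | (0 < d i)%N] -> (eI Ical I i <= d i)%N.
Proof.
move=> h; rewrite /eI; case hi: (i \in under Ical I) => //=.
by have := subsetP h i hi; rewrite inE.
Qed.

Lemma exist_seq m (Ical : {set {set 'I_m}}) (Hok : Ical_ok Ical) (d : 'I_m -> nat) :
  exists s, [/\ all (fun I : {set 'I_m} => I \in Ical) s,
    sorted (fun X Y : {set 'I_m} => Y \subset X) s,
    (forall i, (\sum_(I <- s) eI Ical I i)%N = d i) &
    forall I, I \in Ical -> [set i | (0 < d i)%N] \subset I ->
       all (fun X : {set 'I_m} => X \subset I) s].
Proof.
have [n] := ubnP (\sum_i d i)%N; elim: n d => // n IH d hd.
case: (boolP ([set i | (0 < d i)%N] == set0)) => hS.
  exists [::]; split => // i; rewrite big_nil.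
  by move/eqP/setP: hS => /(_ i); rewrite !inE; case: (d i).
have [I0 [hI0 hU hSI]] := exist_first Hok hS.
pose d' := fun i => (d i - eI Ical I0 i)%N.
have hle : forall i, (eI Ical I0 i <= d i)%N by move=> i; apply: eI_le.
have hlt : (\sum_i d' i < n)%N.
  suff h : (\sum_i d' i < \sum_i d i)%N by apply: leq_trans h _; rewrite -ltnS.
  have [i0 hi0] := set0Pn _ (under_nonempty Hok hI0).
  have -> : (\sum_i d i = \sum_i d' i + \sum_i eI Ical I0 i)%N.
    by rewrite -big_split /=; apply: eq_bigr => i _; rewrite /d' subnK.
  rewrite -[X in (X < _)%N]addn0 ltn_add2l (bigD1 i0) //= /eI hi0.
  by [].
have [s' [h1 h2 h3 h4]] := IH d' hlt.
have hsub : [set i | (0 < d' i)%N] \subset [set i | (0 < d i)%N].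
  by apply/subsetP => i; rewrite !inE /d'; case: (d i).
exists (I0 :: s'); split.
- by rewrite /= hI0 h1.
- rewrite /= (path_sortedE (@Rsub_trans m)) h2 andbT.
  by apply: h4 => //; apply: subset_trans hsub hSI.
- by move=> i; rewrite big_cons h3 /d' subnKC.
- move=> I hI hSI'; rewrite /= (h4 I hI (subset_trans hsub hSI')) andbT.
  by case: Hok => _ _ H3; apply: H3 => //; apply: subset_trans hU hSI'.
Qed.

Lemma sum_pos_in m (Ical : {set {set 'I_m}}) Y t i :
  sorted (fun X Y : {set 'I_m} => Y \subset X) (Y :: t) ->
  (0 < \sum_(I <- Y :: t) eI Ical I i)%N -> i \in Y.
Proof.
move=> hs hpos.
have /hasP[Z hZ hZi] : has (fun Z => 0 < eI Ical Z i)%N (Y :: t).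
  apply/negPn/negP => /hasPn h; move: hpos; rewrite big1_seq // => Z /andP[_ hZ].
  by have := h Z hZ; case: (eI _ _ _).
have hiZ : i \in Z.
  by apply: (subsetP (under_sub Ical Z)); move: hZi; rewrite /eI lt0b.
move: hZ; rewrite inE => /orP[/eqP <- //|hZ].
have := order_path_min (@Rsub_trans m) hs => /allP /(_ Z hZ) h.
exact: (subsetP h).
Qed.

Lemma uniq_seq m (Ical : {set {set 'I_m}}) (Hok : Ical_ok Ical) s t :
  all (fun I : {set 'I_m} => I \in Ical) s ->
  sorted (fun X Y : {set 'I_m} => Y \subset X) s ->
  all (fun I : {set 'I_m} => I \in Ical) t ->
  sorted (fun X Y : {set 'I_m} => Y \subset X) t ->
  (forall i, (\sum_(I <- s) eI Ical I i)%N = (\sum_(I <- t) eI Ical I i)%N) -> s = t.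
Proof.
have key : forall X s' i, i \in under Ical X -> (0 < \sum_(I <- X :: s') eI Ical I i)%N.
  by move=> X s' i hi; rewrite big_cons /eI hi.
elim: s t => [|X s IH] [|Y t] //=.
- move=> _ _ /andP[hY _] _ h.
  have [i hi] := set0Pn _ (under_nonempty Hok hY).
  by move: (key Y t i hi); rewrite -h big_nil.
- move=> /andP[hX _] _ _ _ h.
  have [i hi] := set0Pn _ (under_nonempty Hok hX).
  by move: (key X s i hi); rewrite h big_nil.
move=> /andP[hX hs] sX /andP[hY ht] sY h.
have hXY : X \subset Y.
  case: Hok => _ _ H3; apply: H3 => //; apply/subsetP => i hi.
  by apply: (sum_pos_in (Ical := Ical) sY); rewrite -h; apply: key.
have hYX : Y \subset X.
  case: Hok => _ _ H3; apply: H3 => //; apply/subsetP => i hi.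
  by apply: (sum_pos_in (Ical := Ical) sX); rewrite h; apply: key.
have eXY : X = Y by apply/eqP; rewrite eqEsubset hXY hYX.
subst Y; congr (_ :: _); apply: IH => //.
- exact: path_sorted sX.
- exact: path_sorted sY.
- by move=> i; have := h i; rewrite !big_cons => /addnI.
Qed.

Lemma partA m (Ical : {set {set 'I_m}}) (Hok : Ical_ok Ical) (d : 'I_m -> nat) :
     exists! s : seq {set 'I_m},
       [/\ all (fun I : {set 'I_m} => I \in Ical) s,
           sorted (fun X Y : {set 'I_m} => Y \subset X) s &
           forall i, (\sum_(I <- s) eI Ical I i)%N = d i].
Proof.
have [s [h1 h2 h3 _]] := exist_seq Hok d.
exists s; split => // t [t1 t2 t3]; apply: (uniq_seq Hok) => // i.
by rewrite h3 t3.
Qed.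

Local Open Scope ring_scope.

Lemma term_le (T : eqType) (c : seq T) (P : pred T) (F : T -> rat) x :
  x \in c -> P x -> (forall y, y \in c -> 0 <= F y) ->
  F x <= \sum_(y <- c | P y) F y.
Proof.
move=> hx hP h0; rewrite (big_rem x) //= hP lerDl.
by rewrite big_seq_cond; apply: sumr_ge0 => y /andP[hy _]; apply: h0; apply: mem_rem hy.
Qed.

Lemma maxlem m (Ical : {set {set 'I_m}}) (Hok : Ical_ok Ical)
  (T : eqType) (c : seq T) (g : T -> {set 'I_m}) (f : T -> rat) (P : pred T)
  (I : {set 'I_m}) (r : rat) :
 I \in Ical ->
 (forall p, p \in c -> g p \in Ical) ->
 (forall p q, p \in c -> q \in c -> (g p \subset g q) || (g q \subset g p)) ->
 (forall p, p \in c -> 0 <= f p) ->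
 (forall i, \sum_(p <- c | P p) f p * (eI Ical (g p) i)%:R = r * (eI Ical I i)%:R) ->
 forall p0, p0 \in c -> P p0 -> f p0 != 0 ->
 exists p, [/\ p \in c, P p, f p != 0 & g p = I].
Proof.
move=> hI hg hcomp hf0 hsum p0 hp0 hP0 hf0p.
pose Q := fun n => has (fun p => [&& P p, f p != 0 & #|g p| == n]) c.
have exQ : exists n, Q n by exists #|g p0|; apply/hasP; exists p0; rewrite // hP0 hf0p eqxx.
have ubQ : forall n, Q n -> (n <= m)%N.
  by move=> n /hasP[p _ /and3P[_ _ /eqP <-]]; apply: card_le_m.
case: (ex_maxnP exQ ubQ) => n /hasP[pm hpm /and3P[hPm hfm /eqP hn]] hmaxn.
have hmax : forall q, q \in c -> P q -> f q != 0 -> g q \subset g pm.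
  move=> q hq hPq hfq; have := hmaxn #|g q|.
  have -> : Q #|g q| by apply/hasP; exists q; rewrite // hPq hfq eqxx.
  move=> /(_ isT); rewrite -hn => hle.
  case/orP: (hcomp q pm hq hpm) => // h.
  by have /eqP -> : g pm == g q by rewrite eqEcard h hle.
have hfpos : 0 < f pm by rewrite lt_def hfm hf0.
have hnn : forall i p, p \in c -> 0 <= f p * (eI Ical (g p) i)%:R.
  by move=> i p hp; rewrite mulr_ge0 ?ler0n ?hf0.
have lowb : forall i, i \in under Ical (g pm) ->
    0 < r * (eI Ical I i)%:R.
  move=> i hi; rewrite -hsum; apply: lt_le_trans hfpos _.
  have := term_le (F := fun p => f p * (eI Ical (g p) i)%:R) hpm hPm (hnn i).
  by rewrite /eI hi mulr1.
have [i0 hi0] := set0Pn _ (under_nonempty Hok (hg _ hpm)).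
have rpos : 0 < r.
  by have := lowb i0 hi0; rewrite /eI; case: (i0 \in under Ical I); rewrite ?mulr1 ?mulr0 ?ltxx.
have s1 : g pm \subset I.
  case: Hok => _ _ H3; apply: H3 => //; first exact: hg.
  apply/subsetP => i hi; apply: (subsetP (under_sub Ical I)).
  by have := lowb i hi; rewrite /eI; case: (i \in under Ical I); rewrite ?mulr0 ?ltxx.
have s2 : I \subset g pm.
  case: Hok => _ _ H3; apply: H3 => //; first exact: hg.
  apply/subsetP => i hi.
  have hpos : 0 < \sum_(p <- c | P p) f p * (eI Ical (g p) i)%:R.
    by rewrite hsum /eI hi mulr1.
  have /hasP[q hq /andP[hPq hne]] :
      has (fun p => P p && (f p * (eI Ical (g p) i)%:R != 0)) c.
    apply/negPn/negP => /hasPn h; move: hpos; rewrite big1_seq ?ltxx //.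
    move=> p /andP[hPp hp]; have := h p hp; rewrite hPp /=.
    by move/negPn/eqP.
  have hfq : f q != 0 by apply: contraNneq hne => ->; rewrite mul0r.
  have hiq : i \in under Ical (g q).
    by move: hne; rewrite /eI; case: (i \in under Ical (g q)); rewrite ?mulr0 ?eqxx.
  exact: (subsetP (hmax q hq hPq hfq)) (subsetP (under_sub Ical _) _ hiq).
exists pm; split => //; apply/eqP; by rewrite eqEsubset s1 s2.
Qed.

End Helpers.
Import Helpers.
Local Open Scope ring_scope.

Lemma geW_sub (l : nat) (A : 'M[int]_l) (m : nat)
    (lam : 'I_m -> weight l) (tau : weight l) (Ical : {set {set 'I_m}}) p q :
  geW A lam tau Ical p q -> q.2 \subset p.2.
Proof.
elim => [x y [_ _ h _] | x y z _ h1 _ h2] //.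
exact: subset_trans h2 h1.
Qed.

Theorem mainTheorem16 (l : nat) (A : 'M[int]_l) (m : nat)
    (lam : 'I_m -> weight l) (tau : weight l) (Ical : {set {set 'I_m}}) :
  cartan_finite_irred A ->
  (forall i, dominant (lam i)) ->
  (exists u, wact A u (lamAll lam) = tau) ->
  Ical_ok Ical ->
  tauStandard A lam tau Ical ->
  (forall d : 'I_m -> nat,
     exists! s : seq {set 'I_m},
       [/\ all (fun I : {set 'I_m} => I \in Ical) s,
           sorted (fun X Y : {set 'I_m} => Y \subset X) s &
           forall i, (\sum_(I <- s) eI Ical I i)%N = d i]) /\
  (forall (I : {set 'I_m}) (d : nat), I \in Ical ->
     forall f : elt l m -> rat,
       (LSdeg A lam tau Ical (fun i => (d * eI Ical I i)%N) f /\
        (forall p, f p != 0 -> inWu A lam tau Ical p /\ p.2 = I))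
       <-> LSdeg A lam tau Ical (fun i => (d * eI Ical I i)%N) f).
Proof.
move=> _ _ _ Hok _; split; first by move=> d; apply: partA.
move=> I d hI f; split; first by case.
move=> hL; split => // p hp.
have hL' := hL; case: hL' => c [[[[huniq hin hcomp] _ _] hout hnn _ _] hdeg].
have hpc : p \in c by apply: contraNT hp => /hout ->.
split; first exact: hin.
apply/eqP; apply: contraT => hne.
pose F := \sum_(q <- c | q.2 == I) f q.
have hsum : forall i, \sum_(q <- c | q.2 != I) f q * (eI Ical q.2 i)%:R
     = (d%:R - F) * (eI Ical I i)%:R.
  move=> i; have := hdeg i; rewrite /degree (bigID (fun q => q.2 == I)) /= natrM.
  have -> : \sum_(q <- c | q.2 == I) f q * (eI Ical q.2 i)%:R = F * (eI Ical I i)%:R.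
    by rewrite /F big_distrl /=; apply: eq_bigr => q /eqP ->.
  by move=> h; rewrite mulrBl -h addrAC subrr add0r.
have hg : forall q, q \in c -> q.2 \in Ical by move=> q hq; case: (hin q hq).
have hc2 : forall q r, q \in c -> r \in c -> (q.2 \subset r.2) || (r.2 \subset q.2).
  by move=> q r hq hr; case: (hcomp q r hq hr) => /geW_sub h; rewrite h ?orbT.
have [q [_ /= hq _ hq2]] :=
  @maxlem m Ical Hok _ c snd f (fun q => q.2 != I) I _ hI hg hc2 hnn hsum p hpc hne hp.
by rewrite hq2 eqxx in hq.
Qed.
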